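(* Let $p,q,r,n$ be integers with $r\ge 0$, $q\ge 2$, $p-q=2r+1$, $n=p+q$, and suppose $q\ge 2r+1$. Then the integrality gap of the clique-web inequality with parameters $n,p,q,r$ is at most $2$, i.e. $\mathrm{sdp}(\mathrm{CW}^r_p,-e)/\mathrm{ip}(\mathrm{CW}^r_p,-e)\le 2$.
   Context: For integers $p,r$ with $p\ge 2r+3$, the antiweb $\mathrm{AW}^r_p$ is the graph on $[p]$ with edges $\{i,i+s\}$ for $i\in[p]$, $1\le s\le r$ (indices mod $p$); the web $\mathrm{W}^r_p$ is its complement in $K_p$. With $p,q,r,n$ as in the claim, $\mathrm{CW}^r_p$ is the graph on $[n]$ consisting of a clique on $\{1,\dots,q\}$, a copy of $\mathrm{W}^r_p$ on $\{q+1,\dots,n\}$, and all edges $ij$ with $1\le i\le q<j\le n$. The clique-web inequality is $-\sum_{ij\in E(\mathrm{CW}^r_p)}x_{ij}\le q(r+1)$. For a graph $G=([n],E)$ and $w\in\mathbb{R}^E$, $\mathrm{ip}(G,w)=\max_{x\in\{\pm1\}^n}\sum_{ij\in E}w_{ij}x_ix_j$ and $\mathrm{sdp}(G,w)=\max\sum_{ij\in E}w_{ij}u_i^Tu_j$ over unit vectors $u_i\in\mathbb{R}^n$; $e$ denotes the all-ones vector in $\mathbb{R}^{E(\mathrm{CW}^r_p)}$. The integrality gap of the clique-web inequality is $\mathrm{sdp}(\mathrm{CW}^r_p,-e)/\mathrm{ip}(\mathrm{CW}^r_p,-e)$, where $\mathrm{ip}(\mathrm{CW}^r_p,-e)=q(r+1)$.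 *)

(* Defs.v *)
From HB Require Import structures.
From mathcomp Require Import all_boot all_order all_algebra.
From mathcomp Require Import boolp classical_sets reals.
Set Implicit Arguments. Unset Strict Implicit. Unset Printing Implicit Defensive.
Import Order.TTheory GRing.Theory Num.Theory.
Local Open Scope ring_scope.
Local Open Scope classical_set_scope.

(* Vertices are 0-indexed: paper vertex k corresponds to our k-1.
   Paper vertices 1..q (clique) are our 0..q-1; paper vertices q+1..n
   (the web, paper label q+t, t in [p]) are our q..n-1 (web index t-1). *)

Definition circ_dist (p a b : nat) : nat :=
  let d := if (a <= b)%N then (b - a)%N else (a - b)%N in minn d (p - d)%N.

(* adjacency in the antiweb AW^r_p on {0..p-1}: {i, i+s mod p}, 1 <= s <= r *)
Definition antiweb_adj (p r a b : nat) : bool :=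
  (a != b) && (circ_dist p a b <= r)%N.

Definition web_adj (p r a b : nat) : bool :=
  (a != b) && ~~ antiweb_adj p r a b.

Definition cw_adj (p q r i j : nat) : bool :=
  (i != j) &&
  [|| (i < q)%N, (j < q)%N | web_adj p r (i - q) (j - q)].

Definition CW (n p q r : nat) : rel 'I_n := fun i j => cw_adj p q r i j.

Definition ip_val {R : realType} (n : nat) (G : rel 'I_n)
    (w : 'I_n -> 'I_n -> R) (x : 'I_n -> R) : R :=
  \sum_(i < n) \sum_(j < n | (i < j)%N && G i j) w i j * x i * x j.

Definition ip {R : realType} (n : nat) (G : rel 'I_n)
    (w : 'I_n -> 'I_n -> R) : R :=
  sup [set v | exists s : {ffun 'I_n -> bool},
          v = ip_val G w (fun i => if s i then 1 else -1)].

Definition dotr {R : realType} (n : nat) (U : 'M[R]_n) (i j : 'I_n) : R :=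
  \sum_(k < n) U i k * U j k.

Definition sdp_val {R : realType} (n : nat) (G : rel 'I_n)
    (w : 'I_n -> 'I_n -> R) (U : 'M[R]_n) : R :=
  \sum_(i < n) \sum_(j < n | (i < j)%N && G i j) w i j * dotr U i j.

Definition sdp {R : realType} (n : nat) (G : rel 'I_n)
    (w : 'I_n -> 'I_n -> R) : R :=
  sup [set v | exists U : 'M[R]_n,
          (forall i, dotr U i i = 1) /\ v = sdp_val G w U].

Definition minus_e {R : realType} (n : nat) : 'I_n -> 'I_n -> R :=
  fun _ _ => -1.
Arguments CW : clear implicits.

(* Main.v *)
Require Import Defs.
From HB Require Import structures.
From mathcomp Require Import all_boot all_order all_algebra.
From mathcomp Require Import boolp classical_sets reals.
From mathcomp Require Import zify ring lra.
Import Order.TTheory GRing.Theory Num.Theory.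
Local Open Scope ring_scope.

Definition aw (p q r : nat) {n : nat} (i j : 'I_n) : bool :=
  (q <= i)%N && (q <= j)%N && antiweb_adj p r (i - q) (j - q).

Lemma sym_sum (R : realType) n (f : 'I_n -> 'I_n -> R) :
  (forall i j, f i j = f j i) ->
  \sum_(i < n) \sum_(j < n) f i j = 2 * (\sum_(i < n) \sum_(j < n | (i < j)%N) f i j) + \sum_(i < n) f i i.
Proof.
move=> fs.
have E: forall i, \sum_(j < n) f i j =
   \sum_(j < n | (i < j)%N) f i j + \sum_(j < n | (j < i)%N) f i j + f i i.
  move=> i; rewrite (bigD1 i) //= addrC (bigID (fun j : 'I_n => (i < j)%N)) /=.
  by congr (_ + _ + _); apply: eq_bigl => j; rewrite -val_eqE /=; case: ltngtP.
rewrite (eq_bigr _ (fun i _ => E i)) !big_split /=; congr (_ + _).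
have ->: \sum_(i < n) \sum_(j < n | (j < i)%N) f i j = \sum_(i < n) \sum_(j < n | (i < j)%N) f i j.
  under eq_bigr do rewrite big_mkcond /=.
  rewrite exchange_big /=; apply: eq_bigr => i _.
  by rewrite [RHS]big_mkcond; apply: eq_bigr => j _; rewrite fs.
by rewrite mulr2n mulrDl mul1r.
Qed.

Lemma cw_aw n p q r (i j : 'I_n) : (i < j)%N -> CW n p q r i j = ~~ aw p q r i j.
Proof.
move=> lij; rewrite /CW /cw_adj /aw /web_adj.
have -> : (i != j) = true by rewrite -val_eqE /=; apply/eqP; lia.
case: (ltnP i q) => hi /=; first by [].
case: (ltnP j q) => hj /=; first by [].
have -> : (i - q != j - q)%N = true by apply/eqP; lia.
by [].
Qed.

Lemma nat_insubd n (w : 'I_n) k : (k < n)%N -> nat_of_ord (insubd w k) = k.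
Proof. by move=> h; rewrite (insubdK w) // inE. Qed.

Lemma count_aw p q r : (2 * r < p)%N ->
  (p * r <= \sum_(i < p + q) \sum_(j < p + q | (i < j)%N && aw p q r i j) 1)%N.
Proof.
move=> hp.
rewrite pair_big_dep /= sum1_card.
pose g (ts : 'I_p * 'I_r) : 'I_(p+q) * 'I_(p+q) :=
  let t := ts.1 in let s := ts.2 in let c := (t + s + 1)%N in
  let w := lshift q t in
  if (c < p)%N then (insubd w (q + t)%N, insubd w (q + c)%N)
  else (insubd w (q + c - p)%N, insubd w (q + t)%N).
have ginj : injective g.
  move=> [t s] [t' s']; rewrite /g /=.
  have ht := ltn_ord t; have hs := ltn_ord s; have ht' := ltn_ord t'; have hs' := ltn_ord s'.
  case: ifP => h1; case: ifP => h2 [] /(congr1 val) + /(congr1 val);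
    rewrite !insubdK ?inE; try lia; move=> e1 e2;
    by congr pair; apply: val_inj => /=; lia.
have -> : (p * r = #|[set g x | x in [set: 'I_p * 'I_r]]|)%N.
  by rewrite card_imset // cardsT card_prod !card_ord.
apply: (leq_trans (subset_leq_card (_ : _ \subset
   [set ij : 'I_(p+q) * 'I_(p+q) | (ij.1 < ij.2)%N && aw p q r ij.1 ij.2]))).
  2: by apply: eq_leq; apply: eq_card => x; rewrite inE.

apply/fintype.subsetP => ij /imsetP [[t s] _ ->].
have ht := ltn_ord t; have hs := ltn_ord s.
rewrite inE /g /=; case: ifP => h1 /=; rewrite !insubdK ?inE; try lia;
  rewrite /aw /antiweb_adj /circ_dist /= !nat_insubd; try lia;
  apply/andP; split; try lia;
  apply/andP; split; try lia; apply/andP; split;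
  try (apply/eqP; lia); case: ifP => _; lia.
Qed.



Lemma split_cw (R : realType) n p q r (g : 'I_n -> 'I_n -> R) :
  \sum_(i < n) \sum_(j < n | (i < j)%N && CW n p q r i j) g i j =
  \sum_(i < n) \sum_(j < n | (i < j)%N) g i j -
  \sum_(i < n) \sum_(j < n | (i < j)%N && aw p q r i j) g i j.
Proof.
rewrite -sumrB; apply: eq_bigr => i _.
rewrite [X in _ = X - _](bigID (aw p q r i)) /= addrAC subrr add0r.
by apply: eq_bigl => j; case h: (i < j)%N => //=; rewrite cw_aw.
Qed.

Lemma dot_le1 (R : realType) n (U : 'M[R]_n) i j :
  dotr U i i = 1 -> dotr U j j = 1 -> dotr U i j <= 1.
Proof.
move=> hi hj.
suff: 2 * dotr U i j <= dotr U i i + dotr U j j by rewrite hi hj; lra.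
rewrite /dotr mulr_sumr -big_split /=; apply: ler_sum => k _.
have h : 0 <= (U i k - U j k) * (U i k - U j k) by rewrite -expr2; exact: sqr_ge0.
nra.
Qed.

Lemma sum_dot (R : realType) n (U : 'M[R]_n) :
  0 <= \sum_(i < n) \sum_(j < n) dotr U i j.
Proof.
rewrite /dotr.
under eq_bigr do rewrite exchange_big.
rewrite exchange_big /=; apply: sumr_ge0 => k _.
have -> : \sum_(i < n) \sum_(j < n) U i k * U j k = (\sum_(i < n) U i k) ^+ 2.
  by rewrite expr2 mulr_suml; apply: eq_bigr => i _; rewrite mulr_sumr.
exact: sqr_ge0.
Qed.

Definition Acnt p q r n :=
  (\sum_(i < n) \sum_(j < n | (i < j)%N && aw p q r i j) 1)%N.

Lemma sdp_bound (R : realType) n p q r (U : 'M[R]_n) :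
  (forall i, dotr U i i = 1) ->
  sdp_val (CW n p q r) (@minus_e R n) U <= n%:R / 2 + (Acnt p q r n)%:R.
Proof.
move=> hU; rewrite /sdp_val /minus_e split_cw.
under eq_bigr do under eq_bigr do rewrite mulN1r.
under [X in _ - X]eq_bigr do under eq_bigr do rewrite mulN1r.
rewrite !(eq_bigr _ (fun i _ => sumrN _ _ _)) !sumrN.
have hT := sum_dot R n U.
rewrite (@sym_sum R n (fun i j => dotr U i j)) in hT; last first.
  by move=> i j; rewrite /dotr; apply: eq_bigr => k _; rewrite mulrC.
have hn : \sum_(i < n) dotr U i i = n%:R.
  by rewrite (eq_bigr (fun _ => 1)) // sumr_const card_ord.
rewrite hn in hT.
have hA : \sum_(i < n) \sum_(j < n | (i < j)%N && aw p q r i j) dotr U i j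
          <= (Acnt p q r n)%:R.
  rewrite /Acnt natr_sum; apply: ler_sum => i _; rewrite natr_sum.
  by apply: ler_sum => j _; apply: dot_le1.
lra.
Qed.

Lemma sum_x (R : realType) p q :
  \sum_(i < p + q) (if (q <= i)%N then 1 else -1 : R) = p%:R - q%:R.
Proof.
rewrite -(big_mkord xpredT (fun i => if (q <= i)%N then 1 else -1 : R)).
rewrite (big_cat_nat (leq0n q) (leq_addl p q)) /=.
rewrite big_nat_cond (eq_bigr (fun _ => -1)); last first.
  by move=> i /andP[/andP[_ hi] _]; rewrite leqNgt hi.
rewrite -big_nat_cond sumr_const_nat.
rewrite big_nat_cond (eq_bigr (fun _ => 1)); last first.
  by move=> i /andP[/andP[hi _] _]; rewrite hi.
rewrite -big_nat_cond sumr_const_nat subn0 addnK mulNrn addrC.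
by [].
Qed.

Lemma ip_wit (R : realType) p q r :
  ip_val (CW (p + q) p q r) (@minus_e R (p + q))
    (fun i => if [ffun i : 'I_(p + q) => (q <= i)%N] i then 1 else -1) =
  ((p + q)%:R - (p%:R - q%:R) ^+ 2) / 2 + (Acnt p q r (p + q))%:R.
Proof.
set x := (fun i => _).
rewrite /ip_val /minus_e split_cw.
have hA : \sum_(i < p + q) \sum_(j < p + q | (i < j)%N && aw p q r i j)
      (-1 * x i * x j) = - (Acnt p q r (p + q))%:R.
  rewrite /Acnt natr_sum -sumrN; apply: eq_bigr => i _; rewrite natr_sum -sumrN.
  apply: eq_bigr => j /andP[_]; rewrite /aw => /andP[/andP[hi hj] _].
  by rewrite /x !ffunE hi hj !mulr1.
rewrite hA.
under eq_bigr do under eq_bigr do rewrite -mulrA mulN1r.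
rewrite !(eq_bigr _ (fun i _ => sumrN _ _ _)) sumrN.
have hS := @sym_sum R (p + q) (fun i j => x i * x j) (fun i j => mulrC _ _).
have hd : \sum_(i < p + q) x i * x i = (p + q)%:R.
  rewrite (eq_bigr (fun _ => 1)) ?sumr_const ?card_ord //.
  by move=> i _; rewrite /x; case: ifP => _; rewrite ?mulr1 ?mulrNN ?mulr1.
have hsq : \sum_(i < p + q) \sum_(j < p + q) x i * x j = (p%:R - q%:R) ^+ 2.
  rewrite -(sum_x R p q) expr2 mulr_suml; apply: eq_bigr => i _.
  rewrite mulr_sumr; apply: eq_bigr => j _; by rewrite /x !ffunE.
rewrite hd hsq in hS.
lra.
Qed.

Lemma dot1 (R : realType) n (i : 'I_n) : dotr (1%:M : 'M[R]_n) i i = 1.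
Proof.
rewrite /dotr (bigD1 i) //= !mxE eqxx mulr1 big1 ?addr0 // => k hk.
by rewrite !mxE eq_sym (negbTE hk) mul0r.
Qed.

Theorem mainTheorem10 (R : realType) (p q r n : nat) :
  (2 <= q)%N -> p = (q + 2 * r + 1)%N -> n = (p + q)%N -> (2 * r + 1 <= q)%N ->
  sdp (CW n p q r) (@minus_e R n) / ip (CW n p q r) (@minus_e R n) <= 2.
Proof.
move=> hq hp hn hqr; subst n.
have hA : (p * r <= Acnt p q r (p + q))%N by apply: count_aw; lia.
set A := Acnt p q r (p + q) in hA *.
set v : R := ((p + q)%:R - (p%:R - q%:R) ^+ 2) / 2 + A%:R.
have hip : v <= ip (CW (p + q) p q r) (@minus_e R (p + q)).
  apply: sup_upper_bound; last first.
    by exists [ffun i : 'I_(p + q) => (q <= i)%N]; rewrite ip_wit.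
  split; first by exists v, [ffun i : 'I_(p + q) => (q <= i)%N]; rewrite ip_wit.
  exists (\sum_(i < p + q) \sum_(j < p + q | (i < j)%N && CW (p + q) p q r i j) (1 : R)).
  move=> y [s ->]; rewrite /ip_val /minus_e.
  apply: ler_sum => i _; apply: ler_sum => j _.
  by case: (s i); case: (s j); rewrite /=; lra.
have hsdp : sdp (CW (p + q) p q r) (@minus_e R (p + q)) <= (p + q)%:R / 2 + A%:R.
  apply: ge_sup.
    exists (sdp_val (CW (p + q) p q r) (@minus_e R (p + q)) 1%:M), 1%:M.
    by split=> // i; apply: dot1.
  by move=> y [U [hU ->]]; apply: sdp_bound.
have hA' : ((p * r)%:R : R) <= A%:R by rewrite ler_nat.
have hqr' : (2 * r + 1)%:R <= (q%:R : R) by rewrite ler_nat.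
have hq' : (2%:R : R) <= q%:R by rewrite ler_nat.
have key : 0 < v /\ (p + q)%:R / 2 + A%:R <= 2 * v.
  move: hA' hqr' hq'; rewrite /v hp !natrD !natrM.
  have hr : 0 <= (r%:R : R) by rewrite ler0n.
  move=> hA' hqr' hq'.
  have h1 : 0 <= ((q%:R : R) - 2%:R * r%:R - 1) * (r%:R + 1) by apply: mulr_ge0; lra.
  split; nra.
case: key => hv key.
rewrite ler_pdivrMr; last exact: lt_le_trans hv hip.
lra.
Qed.
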